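(* Let $G$ be a Feynman diagram and $A_G\subseteq\mathbb{Z}^n$ the support of $\mathcal{F}_{z,m}$ for generic $(z,m)\in\mathbb{R}^K\times\mathbb{R}^{\mathcal{E}}$. If $a\in A_G\cap A^1_G$ and the coefficient of $x^a$ in $\mathcal{F}_{z,m}$, viewed as a linear function of $(z,m)$, does not depend on any of the $m_e$ ($e\in\mathcal{E}$), then $a$ is a vertex of $\operatorname{conv}(A_G)$.
   Context: $G$ is a connected graph with $n$ internal edges labeled $1,\dots,n$ carrying variables $x_1,\dots,x_n$ and $N$ external edges (edges with an endpoint of degree one), the external ones labeled by $[N]$. $\mathcal{T}$ is the set of spanning trees of $G$ (restricted to internal edges, viewed as subsets of $[n]$); $\ell=\#\text{edges}-\#\text{vertices}+1$. The first Symanzik polynomial is $\mathcal{U}(x)=\sum_{T\in\mathcal{T}}\prod_{e\notin T}x_e$. $\mathcal{W}$ is the set of spanning 2-forests $\{T_1,T_2\}$ (two disjoint acyclic connected subgraphs covering all vertices). Given a linear map $L:\mathbb{R}^K\to\mathbb{R}^{\mathcal{W}}$ and $\mathcal{E}\subseteq[n]$, $\mathcal{F}_{z,m}(x)=\sum_{\{T_1,T_2\}\in\mathcal{W}}L_{T_1,T_2}(z)\prod_{e\notin T_1\sqcup T_2}x_e+\big(\sum_{e\in\mathcal{E}}m_ex_e\big)\mathcal{U}(x)$. Set $A^1_G=\{e_p+\sum_{j\in[n]\setminus T}e_j: T\in\mathcal{T}, p\in T\}$ and $A^2_G=\{2e_q+\sum_{j\in[n]\setminus(T\cup\{q\})}e_j:T\in\mathcal{T},q\notin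 T\}$; $A_G\subseteq A^1_G\cup A^2_G$. *)

(* Defs.v *)
From mathcomp Require Import all_boot all_order all_algebra.
From mathcomp Require Import reals.
From mathcomp Require Import mpoly.

Set Implicit Arguments.
Unset Strict Implicit.
Unset Printing Implicit Defensive.

Import Order.TTheory GRing.Theory Num.Theory.
Local Open Scope ring_scope.

(* Graphs.  A (multi)graph G on a finite vertex type V with n internal     *)
(* edges (labelled by 'I_n) and N external edges (labelled by 'I_N); the   *)
(* edge type is 'I_n + 'I_N and [ends e] gives the two endpoints of e      *)
(* (self-loops and multiple edges are allowed).                            *)

Definition edge (n N : nat) := ('I_n + 'I_N)%type.

Section Graph.
Variables (V : finType) (n N : nat) (ends : edge n N -> V * V).

Definition adj (S : {set edge n N}) : rel V := fun u v =>
  [exists e in S, (((ends e).1 == u) && ((ends e).2 == v))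
               || (((ends e).1 == v) && ((ends e).2 == u))].

Definition conn (S : {set edge n N}) (u v : V) : bool := connect (adj S) u v.

(* degree of a vertex (a self-loop counts twice) *)
Definition deg (v : V) : nat :=
  #|[set e : edge n N | (ends e).1 == v]| + #|[set e : edge n N | (ends e).2 == v]|.

(* S has no cycle: no edge of S lies on a cycle, i.e. removing any edge of S
   disconnects its endpoints (a self-loop is a cycle). *)
Definition acyclic (S : {set edge n N}) : bool :=
  [forall e in S, ~~ conn (S :\ e) (ends e).1 (ends e).2].

Definition spanning_tree (S : {set edge n N}) : bool :=
  [forall u, forall v, conn S u v] && acyclic S.

(* spanning 2-forest {T1,T2}, encoded by its edge set T1 ⊔ T2: an acyclic
   spanning subgraph with exactly two connected components (T1 and T2). *)
Definition spanning_2forest (S : {set edge n N}) : bool :=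
  acyclic S &&
  [exists u, exists v, ~~ conn S u v && [forall w, conn S u w || conn S v w]].

Definition feynman_diagram : Prop :=
  [/\ forall u v, conn setT u v,
      forall j : 'I_N, (deg (ends (inr j)).1 == 1%N) || (deg (ends (inr j)).2 == 1%N)
    & forall i : 'I_n, (deg (ends (inl i)).1 != 1%N) && (deg (ends (inl i)).2 != 1%N)].

Definition internal (S : {set edge n N}) : {set 'I_n} := [set i | inl i \in S].

Definition Trees : {set {set 'I_n}} :=
  internal @: [set S | spanning_tree S].

Definition TwoForests : {set {set edge n N}} := [set S | spanning_2forest S].

Variable R : realType.

Definition Symanzik_U : {mpoly R[n]} :=
  \sum_(T in Trees) \prod_(i < n | i \notin T) 'X_i.

(* F_{z,m}(x) = sum_{{T1,T2} in W} L_{T1,T2}(z) prod_{e notin T1 ⊔ T2} x_e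
              + (sum_{e in Em} m_e x_e) U(x).
   L F : 'rV_K -> R is the (T1,T2)-component of the linear map L. *)
Definition Symanzik_F (K : nat) (L : {set edge n N} -> 'rV[R]_K -> R)
    (Em : {set 'I_n}) (z : 'rV[R]_K) (m : 'I_n -> R) : {mpoly R[n]} :=
  \sum_(F in TwoForests) L F z *: \prod_(i < n | inl i \notin F) 'X_i
  + (\sum_(e in Em) m e *: 'X_e) * Symanzik_U.

(* A_G: support of F_{z,m} for generic (z,m), i.e. the exponents whose
   coefficient, a linear function of (z,m), is not identically zero. *)
Definition A_G (K : nat) (L : {set edge n N} -> 'rV[R]_K -> R)
    (Em : {set 'I_n}) (a : 'X_{1..n}) : Prop :=
  exists (z : 'rV[R]_K) (m : 'I_n -> R), (Symanzik_F L Em z m)@_a != 0.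

Definition A1_G (a : 'X_{1..n}) : Prop :=
  exists2 T, T \in Trees &
  exists2 p, p \in T & a = (U_(p) + \sum_(j < n | j \notin T) U_(j))%MM.

End Graph.

Definition pt (R : realType) (n : nat) (a : 'X_{1..n}) : 'rV[R]_n :=
  \row_i ((a i)%:R).

Definition conv (R : realType) (n : nat) (A : 'X_{1..n} -> Prop) : 'rV[R]_n -> Prop :=
  fun x => exists (s : seq 'X_{1..n}) (w : seq R),
    [/\ size w = size s, forall a, a \in s -> A a,
        forall t, t \in w -> 0 <= t, \sum_(t <- w) t = 1
      & x = \sum_(i < size s) w`_i *: pt R (nth 0%MM s i)].

Definition is_vertex (R : realType) (n : nat) (P : 'rV[R]_n -> Prop) (x : 'rV[R]_n) : Prop :=
  P x /\ forall (p q : 'rV[R]_n) (t : R), P p -> P q -> 0 < t < 1 ->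
    x = t *: p + (1 - t) *: q -> p = x /\ q = x.

(* Main.v *)
Require Import Defs.
From mathcomp Require Import all_boot all_order all_algebra.
From mathcomp Require Import reals.
From mathcomp Require Import mpoly.
From mathcomp Require Import zify ring lra.
Import Order.TTheory GRing.Theory Num.Theory.
Local Open Scope ring_scope.

Section Terms.
Variable R : realType.
Definition cw (s em : bool) : R := if s then (if em then -1 else -2) else 2.

Lemma term_ge0 (x s em : bool) : 0 <= cw s em * ((x:nat)%:R - (s:nat)%:R).
Proof. by case: x; case: s; case: em; rewrite /cw /= ?mulr1n ?mulr0n; lra. Qed.

Lemma term_gt0 (x s em : bool) : x != s -> 0 < cw s em * ((x:nat)%:R - (s:nat)%:R).
Proof. by case: x; case: s; case: em; rewrite /cw /= ?mulr1n ?mulr0n //; lra. Qed.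

Lemma term_ge2 (x s em : bool) : x && ~~ s -> 2 <= cw s em * ((x:nat)%:R - (s:nat)%:R).
Proof. by case: x; case: s; case: em; rewrite /cw /= ?mulr1n ?mulr0n //; lra. Qed.

Lemma term_ge1 (x s em : bool) : ~~ x && s -> 1 <= cw s em * ((x:nat)%:R - (s:nat)%:R).
Proof. by case: x; case: s; case: em; rewrite /cw /= ?mulr1n ?mulr0n //; lra. Qed.

Lemma term_ge2' (x s em : bool) : [&& ~~ x, s & ~~ em] -> 2 <= cw s em * ((x:nat)%:R - (s:nat)%:R).
Proof. by case: x; case: s; case: em; rewrite /cw /= ?mulr1n ?mulr0n //; lra. Qed.

Lemma sum_ge1 (n : nat) (f : 'I_n -> R) k : (forall i, 0 <= f i) -> f k <= \sum_i f i.
Proof.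
move=> h; rewrite (bigD1 k) //= -[X in X <= _]addr0 lerD2l.
by apply: sumr_ge0 => i _.
Qed.

Lemma sum_ge2 (n : nat) (f : 'I_n -> R) k k' : (forall i, 0 <= f i) -> k' != k ->
  f k + f k' <= \sum_i f i.
Proof.
move=> h hk; rewrite (bigD1 k) //= lerD2l (bigD1 k') //= -[X in X <= _]addr0 lerD2l.
by apply: sumr_ge0 => i _.
Qed.
End Terms.
Arguments sum_ge1 {R n} f k _.
Arguments sum_ge2 {R n} f k k' _ _.
Lemma prodX (R : realType) (n : nat) (P : pred 'I_n) :
  \prod_(i < n | P i) ('X_i : {mpoly R[n]}) = 'X_[(\sum_(i < n | P i) U_(i))%MM].
Proof.
by rewrite (big_morph (fun m : 'X_{1..n} => ('X_[m] : {mpoly R[n]})) (@mpolyXD n R) (@mpolyX0 n R)).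
Qed.

Lemma coefF (R : realType) (V : finType) (n N K : nat) (ends : edge n N -> V * V)
  (L : {set edge n N} -> 'rV[R]_K -> R) (Em : {set 'I_n}) z m b :
  (Symanzik_F ends L Em z m)@_b =
  \sum_(F in TwoForests ends) L F z * ((\sum_(i < n | inl i \notin F) U_(i))%MM == b)%:R
  + \sum_(e in Em) \sum_(T in Trees ends)
      m e * ((U_(e) + \sum_(i < n | i \notin T) U_(i))%MM == b)%:R.
Proof.
have hs := big_morph (@mcoeff n R b) (@mcoeffD n R b) (@mcoeff0 n R b).
rewrite /Symanzik_F mcoeffD; congr (_ + _).
  rewrite hs; apply: eq_bigr => F _.
  by rewrite mcoeffZ prodX mcoeffX.
rewrite mulr_suml hs; apply: eq_bigr => e _.
rewrite /Symanzik_U mulr_sumr hs; apply: eq_bigr => T _.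
by rewrite -scalerAl mcoeffZ prodX -mpolyXD mcoeffX.
Qed.
Lemma monoE (n : nat) (P : pred 'I_n) i : (\sum_(j < n | P j) U_(j))%MM i = P i.
Proof.
rewrite mnm_sumE big_mkcond (bigD1 i) //= mnm1E eqxx big1 => [|j /negbTE hj].
  by rewrite addn0; case: (P i).
by rewrite mnm1E hj; case: (P j).
Qed.
Lemma deg1_edge (V : finType) (n N : nat) (ends : edge n N -> V * V) v e S :
  deg ends v = 1%N -> ((ends e).1 = v \/ (ends e).2 = v) ->
  spanning_tree ends S -> e \in S.
Proof.
move=> hd hv /andP[/forallP Hc _].
set A := [set e | (ends e).1 == v].
set B := [set e | (ends e).2 == v].
have hU : (#|A :|: B| + #|A :&: B| = 1)%N by rewrite cardsUI.
have eAB : e \in A :|: B by rewrite !inE; case: hv => ->; rewrite eqxx ?orbT.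
have hUp : (0 < #|A :|: B|)%N by apply/card_gt0P; exists e.
pose w := if (ends e).1 == v then (ends e).2 else (ends e).1.
have wv : w != v.
  apply/eqP => hw.
  have eI : e \in A :&: B.
    move: hw; rewrite /w !inE; case h1: ((ends e).1 == v) => /= hw.
      by rewrite hw eqxx.
    by rewrite hw eqxx in h1.
  have : (0 < #|A :&: B|)%N by apply/card_gt0P; exists e.
  by move: hU hUp; clear; lia.
have := forallP (Hc v) w.
move/connectP => [[|x p] /= Hp Hl]; first by rewrite Hl eqxx in wv.
case/andP: Hp => /existsP [e' /andP [e'S He'] _].
have e'AB : e' \in A :|: B.
  by rewrite !inE; case/orP: He' => /andP [/eqP-> /eqP->]; rewrite eqxx ?orbT.
have hle : (#|A :|: B| <= 1)%N by move: hU; clear; lia.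
by rewrite (card_le1_eqP hle e' e e'AB eAB).
Qed.

Lemma ext_in_tree (V : finType) (n N : nat) (ends : edge n N -> V * V)
  (HG : feynman_diagram ends) S j : spanning_tree ends S -> inr j \in S.
Proof.
case: HG => _ H2 _ hS.
case/orP: (H2 j) => /eqP hd.
  by apply: (@deg1_edge _ _ _ ends _ (inr j) S hd _ hS); left.
by apply: (@deg1_edge _ _ _ ends _ (inr j) S hd _ hS); right.
Qed.

Lemma tree_minus (V : finType) (n N : nat) (ends : edge n N -> V * V)
  (HG : feynman_diagram ends) T p :
  T \in Trees ends -> p \in T -> T :\ p \notin Trees ends.
Proof.
case/imsetP => FT; rewrite inE => hFT -> hp.
apply/negP => /imsetP [FT']; rewrite inE => hFT' hint.
have eq : FT' = FT :\ inl p.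
  apply/setP => [[i|j]].
    move/setP: hint => /(_ i).
    rewrite /internal !inE /= => <-.
    by rewrite (inj_eq (@inl_inj _ _)).
  by rewrite !inE (@ext_in_tree _ _ _ ends HG _ j hFT) (@ext_in_tree _ _ _ ends HG _ j hFT').
case/andP: hFT => _ /forallP /(_ (inl p)).
rewrite /internal inE in hp; rewrite hp /= -eq.
case/andP: hFT' => /forallP /(_ (ends (inl p)).1) /forallP /(_ (ends (inl p)).2) -> _.
by [].
Qed.
Section Conv.
Variables (R : realType) (n : nat) (c : 'I_n -> R).

Definition lam (x : 'rV[R]_n) : R := \sum_i c i * x ord0 i.

Lemma lamD x y : lam (x + y) = lam x + lam y.
Proof. by rewrite /lam -big_split; apply: eq_bigr => i _; rewrite mxE mulrDr. Qed.

Lemma lamZ k x : lam (k *: x) = k * lam x.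
Proof. by rewrite /lam mulr_sumr; apply: eq_bigr => i _; rewrite mxE mulrCA. Qed.

Lemma lam_sum k (F : 'I_k -> 'rV[R]_n) : lam (\sum_(i < k) F i) = \sum_(i < k) lam (F i).
Proof.
rewrite /lam exchange_big /=; apply: eq_bigr => i _.
by rewrite summxE mulr_sumr.
Qed.

Variables (A : 'X_{1..n} -> Prop) (a : 'X_{1..n}).
Hypothesis Hstrict : forall b, A b -> b != a -> lam (pt R a) < lam (pt R b).

Lemma lam_ge b : A b -> lam (pt R a) <= lam (pt R b).
Proof.
move=> hb; case: (eqVneq b a) => [->|hne]; first by [].
exact/ltW/Hstrict.
Qed.

Lemma conv_ge x : conv A x -> lam (pt R a) <= lam x /\ (lam x = lam (pt R a) -> x = pt R a).
Proof.
case=> s [w [Hsz HA Hw0 Hw1 ->]].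
have hW : \sum_(i < size s) w`_i = 1.
  by rewrite -Hsz -Hw1 (big_nth 0) big_mkord.
have wge i : (i < size s)%N -> 0 <= w`_i.
  by move=> hi; apply: Hw0; rewrite mem_nth // Hsz.
have hd : lam (\sum_(i < size s) w`_i *: pt R (nth 0%MM s i)) - lam (pt R a) =
   \sum_(i < size s) w`_i * (lam (pt R (nth 0%MM s i)) - lam (pt R a)).
  rewrite lam_sum -[X in _ - X]mul1r -hW mulr_suml -sumrB.
  by apply: eq_bigr => i _; rewrite lamZ mulrBr.
have tge i : (i < size s)%N -> 0 <= w`_i * (lam (pt R (nth 0%MM s i)) - lam (pt R a)).
  move=> hi; apply: mulr_ge0; first exact: wge.
  by rewrite subr_ge0; apply: lam_ge; apply: HA; rewrite mem_nth.
split.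
  rewrite -subr_ge0 hd; apply: sumr_ge0 => i _; exact: tge.
move=> heq.
have h0 : \sum_(i < size s) w`_i * (lam (pt R (nth 0%MM s i)) - lam (pt R a)) = 0.
  by rewrite -hd heq subrr.
have := psumr_eq0P (fun (i : 'I_(size s)) _ => tge i (ltn_ord i)) h0 => hz.
transitivity (\sum_(i < size s) w`_i *: pt R a); last by rewrite -scaler_suml hW scale1r.
apply: eq_bigr => i _.
have := hz i isT; move/eqP; rewrite mulf_eq0 => /orP [/eqP -> | ]; first by rewrite !scale0r.
rewrite subr_eq0 => /eqP he.
case: (eqVneq (nth 0%MM s i) a) => [-> // | hne].
have := @Hstrict _ (HA _ (mem_nth 0%MM (ltn_ord i))) hne.
by rewrite he ltxx.
Qed.

Lemma vertex_of_functional : A a -> is_vertex (conv A) (pt R a).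
Proof.
move=> ha.
have ca : conv A (pt R a).
  exists [:: a], [:: 1]; split => //.
  - by move=> b; rewrite inE => /eqP ->.
  - by move=> t; rewrite inE => /eqP ->.
  - by rewrite big_seq1.
  - by rewrite big_ord1 /= scale1r.
split => // p q t hp hq /andP [t0 t1] he.
have [hp1 hp2] := conv_ge _ hp.
have [hq1 hq2] := conv_ge _ hq.
have hl : lam (pt R a) = t * lam p + (1 - t) * lam q by rewrite he lamD !lamZ.
have e1 : lam p = lam (pt R a) by nra.
have e2 : lam q = lam (pt R a) by nra.
by split; [apply: hp2 | apply: hq2].
Qed.
End Conv.

Theorem mainTheorem17 (R : realType) (V : finType) (n N K : nat)
  (ends : edge n N -> V * V)
  (HG : feynman_diagram ends)
  (L : {set edge n N} -> 'rV[R]_K -> R)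
  (HL : forall F (c : R) (z1 z2 : 'rV[R]_K), L F (c *: z1 + z2) = c * L F z1 + L F z2)
  (Em : {set 'I_n})
  (a : 'X_{1..n})
  (HaA : A_G ends L Em a)
  (Ha1 : A1_G ends a)
  (Hnom : forall (z : 'rV[R]_K) (m m' : 'I_n -> R),
      (Symanzik_F ends L Em z m)@_a = (Symanzik_F ends L Em z m')@_a) :
  is_vertex (conv (A_G ends L Em)) (pt R a).
Proof.
case: Ha1 => T hT [p hp ha].
pose S := p |: ~: T.
have haE : forall i, a i = (i \in S) :> nat.
  move=> i; rewrite ha mnmDE mnm1E monoE !inE.
  case: (eqVneq p i) => [<-|hne] /=; first by rewrite hp.
  by [].
have noEm : forall k T', k \in Em -> T' \in Trees ends ->
    (U_(k) + \sum_(i < n | i \notin T') U_(i))%MM != a.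
  move=> k T' hk hT'; apply/negP => /eqP heq.
  have := Hnom 0 (fun i => (i == k)%:R) (fun _ => 0).
  rewrite !coefF => /addrI.
  rewrite [X in _ = X]big1 => [|e _]; last by rewrite big1 // => T0 _; rewrite mul0r.
  rewrite (bigD1 k) //= [X in _ + X]big1 => [|e /andP [_ /negbTE ->]]; last first.
    by rewrite big1 // => T0 _; rewrite mul0r.
  rewrite addr0 eqxx.
  have hge : forall T0 : {set 'I_n}, T0 \in Trees ends ->
      0 <= 1%:R * ((U_(k) + \sum_(i < n | i \notin T0) U_(i))%MM == a)%:R :> R.
    by move=> T0 _; rewrite mul1r ler0n.
  move/(psumr_eq0P hge)/(_ T' hT').
  by rewrite heq eqxx mul1r; apply/eqP; rewrite oner_eq0.
have hsupp : forall b, A_G ends L Em b ->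
    (exists2 F, F \in TwoForests ends & (\sum_(i < n | inl i \notin F) U_(i))%MM == b) \/
    (exists e, exists T', [/\ e \in Em, T' \in Trees ends &
        (U_(e) + \sum_(i < n | i \notin T') U_(i))%MM == b]).
  move=> b [z [m hb]].
  case: (boolP [exists F in TwoForests ends,
      (\sum_(i < n | inl i \notin F) U_(i))%MM == b]) => [/existsP [F /andP [hF hFb]]|h1].
    by left; exists F.
  case: (boolP [exists e in Em, exists T' in Trees ends,
      (U_(e) + \sum_(i < n | i \notin T') U_(i))%MM == b]) =>
      [/existsP [e /andP [he /existsP [T' /andP [hT' hb']]]]|h2].
    by right; exists e, T'.
  exfalso; move/negP: hb; apply; apply/eqP.
  rewrite coefF big1 => [|F hF]; last first.
    move: h1; rewrite negb_exists => /forallP /(_ F); rewrite hF /= => /negbTE ->.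
    by rewrite mulr0.
  rewrite big1 ?addr0 // => e he; rewrite big1 // => T' hT'.
  move: h2; rewrite negb_exists => /forallP /(_ e); rewrite he /= negb_exists.
  by move=> /forallP /(_ T'); rewrite hT' /= => /negbTE ->; rewrite mulr0.
pose c := fun i : 'I_n => cw R (i \in S) (i \in Em).
apply: (@vertex_of_functional R n c) => //.
move=> b hb hne; rewrite -subr_gt0.
have hdiff : @lam R n c (pt R b) - @lam R n c (pt R a) =
    \sum_i c i * ((b i)%:R - ((i \in S) : nat)%:R).
  by rewrite /lam -sumrB; apply: eq_bigr => i _; rewrite !mxE mulrBr haE.
rewrite hdiff.
case: (hsupp b hb) => [[F hF /eqP hbF] | [e [T' [he hT' /eqP hbT]]]].
  have bi : forall i, b i = (inl i \notin F) :> nat by move=> i; rewrite -hbF monoE.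
  case: (boolP [exists i, (inl i \notin F) != (i \in S)]) => [/existsP [i hi] | hall].
    apply: (lt_le_trans _ (sum_ge1 _ i _)).
      by rewrite bi; apply: term_gt0.
    by move=> j; rewrite bi; apply: term_ge0.
  exfalso; move/negP: hne; apply; apply/eqP/mnmP => i.
  move: hall; rewrite negb_exists => /forallP /(_ i) /negPn /eqP.
  by rewrite bi haE => ->.
have bi : forall i, b i = ((e == i) + (i \notin T'))%N.
  by move=> i; rewrite -hbT mnmDE mnm1E monoE.
under eq_bigr => i _ do rewrite bi natrD -addrA mulrDr.
rewrite big_split /=.
rewrite (bigD1 e) //= eqxx big1 => [|i /negbTE]; last first.
  by rewrite eq_sym => ->; rewrite mulr0.
rewrite addr0.
have hb0 : forall i, 0 <= c i * (((i \notin T') : nat)%:R - ((i \in S) : nat)%:R).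
  by move=> i; apply: term_ge0.
case heS: (e \in S); last first.
  rewrite /c /cw heS mulr1n.
  have : 0 <= \sum_i c i * (((i \notin T') : nat)%:R - ((i \in S) : nat)%:R).
    by apply: sumr_ge0 => i _; exact: hb0.
  rewrite /c /cw; lra.
rewrite /c /cw heS he mulr1n.
suff : 2 <= \sum_i c i * (((i \notin T') : nat)%:R - ((i \in S) : nat)%:R).
  by rewrite /c /cw; lra.
case: (boolP [exists i, (i \notin T') && (i \notin S)]) => [/existsP [i hi] | hall].
  apply: (le_trans _ (sum_ge1 _ i hb0)); exact: term_ge2.
have hout : forall i, i \notin S -> i \in T'.
  move=> i hi; apply/negPn/negP => hiT.
  by move: hall; rewrite negb_exists => /forallP /(_ i); rewrite hiT hi.
have hneq : T' != T :\ p.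
  apply/negP => /eqP hTe.
  by move: (@tree_minus _ _ _ ends HG _ _ hT hp); rewrite -hTe hT'.
have [k hk] : exists k, (k \in S) && (k \in T').
  case: (boolP [exists k, (k \in S) && (k \in T')]) => [/existsP [k hk] | hno].
    by exists k.
  exfalso; move/negP: hneq; apply; apply/eqP/setP => i.
  move: hno; rewrite negb_exists => /forallP /(_ i).
  have := hout i; rewrite !inE.
  by case: (i \in T'); case: (i == p); case: (i \in T) => //=; move=> h _; rewrite h.
case/andP: hk => hkS hkT.
case hkE: (k \in Em); last first.
  apply: (le_trans _ (sum_ge1 _ k hb0)); apply: term_ge2'.
  by rewrite hkT hkS hkE.
case: (boolP [exists k', [&& k' != k, k' \in S & k' \in T']]) =>
    [/existsP [k' /and3P [hk' hk'S hk'T]] | hno].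
  apply: (le_trans _ (sum_ge2 _ k k' hb0 hk')).
  have h1 : 1 <= c k * (((k \notin T') : nat)%:R - ((k \in S) : nat)%:R).
    by apply: term_ge1; rewrite hkT hkS.
  have h2 : 1 <= c k' * (((k' \notin T') : nat)%:R - ((k' \in S) : nat)%:R).
    by apply: term_ge1; rewrite hk'T hk'S.
  lra.
exfalso; move/negP: (noEm k T' hkE hT'); apply; apply/eqP/mnmP => i.
rewrite mnmDE mnm1E monoE haE.
case: (eqVneq k i) => [<-|hki] /=; first by rewrite hkT hkS.
case hiS: (i \in S) => /=.
  move: hno; rewrite negb_exists => /forallP /(_ i).
  by rewrite eq_sym hki hiS /=; case: (i \in T').
by rewrite hout // hiS.
Qed.
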